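(* Fix $X\in\{\mathsf B,\mathsf C,\mathsf D\}$ and $n\in\mathbb Z_{>0}$. Let $v\in W^X_n$ with $k:=\mathsf{LD}(v)>0$, let $l\ge1$, and let $j_1,\dots,j_l\in\mathbb Z$ satisfy either $j_1<j_2<\cdots<j_l<k$, or (only when $X=\mathsf B$) $j_1=0$ and $j_2<\cdots<j_l<k$, such that $t_{j_ak}\in W^X_\infty$ and $\ell^X(vt_{j_1k}t_{j_2k}\cdots t_{j_ak})=\ell^X(v)+a$ for all $a\in[l]$. Let $u=vt_{j_1k}t_{j_2k}\cdots t_{j_lk}$. Then either (a) $u\in W^X_n$ and $u\prec_{\mathsf{LD}}v$, or (b) $u\in W^X_{n+1}$ and $\mathsf{LD}(u)<\mathsf{LD}(v)$.
   Context: A signed permutation is a bijection $w$ of $\mathbb Z$ with $w(-i)=-w(i)$ and $w(i)=i$ for all but finitely many $i$; $(wt)(m)=w(t(m))$. $W^{\mathsf B}_\infty=W^{\mathsf C}_\infty$: all signed permutations; $W^{\mathsf D}_\infty$: those with $|\{i>0:w(i)<0\}|$ even; $W^X_n$: elements fixing every $m>n$. Lengths $\ell^{\mathsf B}=\ell^{\mathsf C}=(\mathrm{inv}+\ell_0)/2$, $\ell^{\mathsf D}=(\mathrm{inv}-\ell_0)/2$, with $\mathrm{inv}(w)=|\{(p,q):p<q,w(p)>w(q)\}|$ over $\mathbb Z^2$ and $\ell_0(w)=|\{p>0:w(p)<0\}|$. For $i\ne0$, $t_{ij}=(i,j)(-i,-j)$; $t_{0j}=(-j,j)$ (in $W^{\mathsf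 B}_\infty$, not in $W^{\mathsf D}_\infty$). $\mathrm{Des}(w)=\{m>0:w(m)>w(m+1)\}$, $\mathsf{LD}(w)=\max(\{0\}\cup\mathrm{Des}(w))$. The partial order $\prec_{\mathsf{LD}}$ on signed permutations: $u\prec_{\mathsf{LD}}w$ iff $\mathsf{LD}(u)<\mathsf{LD}(w)$, or $0<\mathsf{LD}(u)=\mathsf{LD}(w)$ and $u(\mathsf{LD}(u))<w(\mathsf{LD}(w))$. *)

(* Defs.v *)
(* Signed permutations are modelled as functions int -> int. *)
From Stdlib Require Import ClassicalEpsilon.
From mathcomp Require Import all_boot all_order all_algebra.
Set Implicit Arguments. Unset Strict Implicit. Unset Printing Implicit Defensive.
Import Order.TTheory GRing.Theory Num.Theory.
Local Open Scope ring_scope.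

Inductive typ := TB | TC | TD.

Definition is_sperm (w : int -> int) : Prop :=
  bijective w /\ (forall i, w (- i) = - w i) /\
  exists N : nat, forall i : int, (N < `|i|)%N -> w i = i.

(* a chosen support bound (any valid one; all statistics below do not
   depend on which valid bound is chosen) *)
Definition sbound (w : int -> int) : nat :=
  epsilon (inhabits 0%N) (fun N : nat => forall i : int, (N < `|i|)%N -> w i = i).

Definition win (N : nat) : seq int := [seq (i%:Z - N%:Z) | i <- iota 0 (2 * N).+1].
Definition pwin (N : nat) : seq int := [seq i.+1%:Z | i <- iota 0 N].

Definition inv (w : int -> int) : nat :=
  (\sum_(p <- win (sbound w)) \sum_(q <- win (sbound w)) (((p < q)%R && (w q < w p)%R) : nat))%N.

Definition ell0 (w : int -> int) : nat :=
  (\sum_(p <- pwin (sbound w)) ((w p < 0)%R : nat))%N.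

Definition len (X : typ) (w : int -> int) : nat :=
  match X with
  | TD => ((inv w - ell0 w) %/ 2)%N
  | _ => ((inv w + ell0 w) %/ 2)%N
  end.

Definition LD (w : int -> int) : nat :=
  (\max_(m <- iota 1 (sbound w) | (w (m%:Z + 1) < w m%:Z)%R) m)%N.

Definition inWinf (X : typ) (w : int -> int) : Prop :=
  is_sperm w /\ (X = TD -> ~~ odd (ell0 w)).

Definition inW (X : typ) (n : nat) (w : int -> int) : Prop :=
  inWinf X w /\ forall m : int, n%:Z < m -> w m = m.

Definition transp (a b : int) (m : int) : int :=
  if m == a then b else if m == b then a else m.

Definition t (i j : int) : int -> int :=
  if i == 0 then transp (- j) j
  else transp i j \o transp (- i) (- j).

Fixpoint prodt (v : int -> int) (j : nat -> int) (k : int) (a : nat) : int -> int :=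
  match a with
  | 0%N => v
  | a'.+1 => prodt v j k a' \o t (j a) k
  end.

Definition precLD (u w : int -> int) : Prop :=
  (LD u < LD w)%N \/ ((0 < LD u)%N /\ LD u = LD w /\ u (LD u)%:Z < w (LD w)%:Z).

(* Main.v *)
Require Import Defs.
From mathcomp Require Import all_boot all_order all_algebra zify.
From Stdlib Require Import ClassicalEpsilon FunctionalExtensionality.
Import Order.TTheory GRing.Theory Num.Theory.
Local Open Scope ring_scope.
Set Implicit Arguments. Unset Strict Implicit. Unset Printing Implicit Defensive.

Lemma mem_win (N : nat) (x : int) : (x \in win N) = (`|x| <= N)%N.
Proof.
apply/idP/idP.
- case/mapP => i; rewrite mem_iota => /andP[_ hi] ->. lia.
- move=> hx; apply/mapP; exists (absz (x + N%:Z)); first by rewrite mem_iota; lia.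
  lia.
Qed.

Lemma uniq_win N : uniq (win N).
Proof. rewrite map_inj_uniq ?iota_uniq // => a b h; lia. Qed.

Lemma mem_pwin (N : nat) (x : int) : (x \in pwin N) = (0 < x) && (x <= N%:Z).
Proof.
apply/idP/idP.
- case/mapP => i; rewrite mem_iota => /andP[_ hi] ->. lia.
- move=> hx; apply/mapP; exists (absz x).-1; first by rewrite mem_iota; lia.
  lia.
Qed.

Lemma uniq_pwin N : uniq (pwin N).
Proof. rewrite map_inj_uniq ?iota_uniq // => a b h; lia. Qed.

Definition valid (N : nat) (w : int -> int) := forall i : int, (N < `|i|)%N -> w i = i.

Lemma valid_le N M w : valid N w -> (N <= M)%N -> valid M w.
Proof. move=> h hNM i hi; apply: h; lia. Qed.

Lemma win_pres N w x : injective w -> valid N w -> (`|x| <= N)%N -> (`|w x| <= N)%N.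
Proof.
move=> inj hv hx; rewrite leqNgt; apply/negP => hw.
have := hv _ hw => /inj h; rewrite h in hw; lia.
Qed.

Definition invN (N : nat) (w : int -> int) : nat :=
  (\sum_(p <- win N) \sum_(q <- win N) (((p < q)%R && (w q < w p)%R) : nat))%N.

Definition ell0N (N : nat) (w : int -> int) : nat :=
  (\sum_(p <- pwin N) ((w p < 0)%R : nat))%N.

Lemma sum_restrict (s r : seq int) (F : int -> nat) :
  uniq s -> uniq r -> {subset r <= s} -> (forall x, x \in s -> x \notin r -> F x = 0%N) ->
  (\sum_(x <- s) F x = \sum_(x <- r) F x)%N.
Proof.
move=> us ur sub h0.
rewrite (bigID (fun x => x \in r)) /= [X in (_ + X)%N]big1_seq ?addn0; last first.
  by move=> x /andP[xr xs]; apply: h0.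
rewrite -big_filter; apply: perm_big; apply: uniq_perm; rewrite ?filter_uniq //.
move=> x; rewrite mem_filter; apply/andP/idP => [[]//|xr]; split=> //; exact: sub.
Qed.

Lemma invN_ext N M w : injective w -> valid N w -> (N <= M)%N -> invN M w = invN N w.
Proof.
move=> inj hv hNM; rewrite /invN.
have subw : {subset win N <= win M} by move=> x; rewrite !mem_win; lia.
under eq_bigr => x _.
  rewrite (@sum_restrict _ (win N) _ (uniq_win _) (uniq_win _) subw); last first.
    move=> y _; rewrite mem_win -ltnNge => hy.
    rewrite (hv _ hy).
    case: (ltP (N%:Z) y) => hyN.
      case: (boolP (`|x| <= N)%N) => hx.
        have := win_pres inj hv hx; move=> hwx.
        apply/eqP; rewrite eqb0 negb_and; apply/orP; right; rewrite -leNgt; lia.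
      rewrite -ltnNge in hx; rewrite (hv x) //; apply/eqP; rewrite eqb0 negb_and; apply/orP.
      case: (ltP x y) => hxy; last by left.
      right; rewrite -leNgt; lia.
    have hyl : y < - (N%:Z) by lia.
    apply/eqP; rewrite eqb0 negb_and; apply/orP.
    case: (ltP x y) => hxy; last by left.
    have hx : (N < `|x|)%N by lia.
    right; rewrite (hv x hx) -leNgt; lia.
  over.
rewrite (@sum_restrict _ (win N) _ (uniq_win _) (uniq_win _) subw) //.
move=> x _; rewrite mem_win -ltnNge => hx.
apply: big1_seq => y; rewrite mem_win => hy.
have := win_pres inj hv hy => hwy.
rewrite (hv _ hx); apply/eqP; rewrite eqb0 negb_and; apply/orP.
case: (ltP x y) => hxy; last by left.
right; rewrite -leNgt; lia.
Qed.

Lemma sbound_valid N w : valid N w -> valid (sbound w) w.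
Proof.
move=> hN; rewrite /sbound.
apply: (epsilon_spec (inhabits 0%N) (fun N : nat => forall i : int, (N < `|i|)%N -> w i = i)).
by exists N.
Qed.

Lemma sperm_inj w : is_sperm w -> injective w.
Proof. by case=> [/bij_inj]. Qed.

Lemma inv_invN N w : injective w -> valid N w -> Defs.inv w = invN N w.
Proof.
move=> inj hv; have hv0 := sbound_valid hv.
change (Defs.inv w) with (invN (sbound w) w).
rewrite -(@invN_ext _ (maxn (sbound w) N)) ?leq_maxl //.
by rewrite (@invN_ext N) ?leq_maxr.
Qed.

Lemma ell0N_ext N M w : valid N w -> (N <= M)%N -> ell0N M w = ell0N N w.
Proof.
move=> hv hNM; rewrite /ell0N; apply: sum_restrict; rewrite ?uniq_pwin //.
  by move=> x; rewrite !mem_pwin; lia.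
move=> x; rewrite !mem_pwin => /andP[h1 h2] h3.
have hx : (N < `|x|)%N by lia.
by rewrite (hv _ hx); apply/eqP; rewrite eqb0 -leNgt; lia.
Qed.

Lemma ell0_ell0N N w : valid N w -> ell0 w = ell0N N w.
Proof.
move=> hv; have hv0 := sbound_valid hv.
change (ell0 w) with (ell0N (sbound w) w).
rewrite -(@ell0N_ext _ (maxn (sbound w) N)) ?leq_maxl //.
by rewrite (@ell0N_ext N) ?leq_maxr.
Qed.

Definition lenN (X : typ) N w : nat :=
  match X with
  | TD => ((invN N w - ell0N N w) %/ 2)%N
  | _ => ((invN N w + ell0N N w) %/ 2)%N
  end.

Lemma len_lenN X N w : injective w -> valid N w -> len X w = lenN X N w.
Proof. by move=> inj hv; case: X; rewrite /len /lenN (inv_invN inj hv) (ell0_ell0N hv). Qed.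

Lemma ell0N_le_invN N w : w 0 = 0 -> (ell0N N w <= invN N w)%N.
Proof.
move=> w0; rewrite /invN (bigD1_seq 0) ?uniq_win ?mem_win //= w0.
apply: leq_trans (leq_addr _ _).
rewrite /ell0N (@sum_restrict (win N) (pwin N) _ (uniq_win _) (uniq_pwin _)); last 2 first.
- by move=> x; rewrite mem_win mem_pwin; lia.
- move=> x; rewrite mem_win mem_pwin => hx hn; case: (ltP 0 x) => h0 //=.
  by rewrite h0 /= -ltNge in hn; exfalso; lia.
apply: eq_leq; apply: eq_big_seq => x; rewrite mem_pwin => /andP[-> _] //.
Qed.

Lemma transpK p q x : transp p q (transp p q x) = x.
Proof. rewrite /transp; do ![case: eqP => //=]; move=> *; subst; lia. Qed.

Lemma transp_inj p q : injective (transp p q).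
Proof. exact: (can_inj (@transpK p q)). Qed.

Lemma transp_other p q x : x != p -> x != q -> transp p q x = x.
Proof. by move=> h1 h2; rewrite /transp (negbTE h1) (negbTE h2). Qed.

Lemma transp_l p q : transp p q p = q.
Proof. by rewrite /transp eqxx. Qed.

Lemma transp_r p q : transp p q q = p.
Proof. rewrite /transp; case: eqVneq => [->|] //; by rewrite eqxx. Qed.

Lemma transp_win N p q x : (`|p| <= N)%N -> (`|q| <= N)%N ->
  (`|transp p q x| <= N)%N = (`|x| <= N)%N.
Proof.
move=> hp hq; rewrite /transp; case: (eqVneq x p) => [->|hxp]; first by rewrite hp hq.
by case: (eqVneq x q) => [->|hxq]; first by rewrite hp hq.
Qed.

Lemma sum_transp N p q (F : int -> nat) : (`|p| <= N)%N -> (`|q| <= N)%N ->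
  (\sum_(x <- win N) F (transp p q x) = \sum_(x <- win N) F x)%N.
Proof.
move=> hp hq; rewrite -(big_map (transp p q) xpredT F); apply: perm_big.
apply: uniq_perm; first by rewrite (map_inj_uniq (@transp_inj p q)) uniq_win.
  exact: uniq_win.
move=> x; apply/mapP/idP => [[y yw ->]|xw].
  by rewrite mem_win transp_win // -mem_win.
by exists (transp p q x); rewrite ?transpK // mem_win transp_win // -mem_win.
Qed.

Lemma split2 (r : seq int) (F : int -> nat) a b : uniq r -> a \in r -> b \in r -> a != b ->
 (\sum_(x <- r) F x = F a + F b + \sum_(x <- r | (x != a) && (x != b)) F x)%N.
Proof.
move=> ur ar br ab; rewrite (bigD1_seq a) //= -big_filter (bigD1_seq b) ?filter_uniq //.
  by rewrite big_filter_cond addnA.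
by rewrite mem_filter eq_sym ab.
Qed.

Definition nbN N (w : int -> int) p q : nat :=
  (\sum_(c <- win N) (((p < c)%R && (c < q)%R && (w p < w c)%R && (w c < w q)%R) : nat))%N.

Lemma invN_transp (N : nat) (w g : int -> int) (p q : int) : injective w -> (`|p| <= N)%N -> (`|q| <= N)%N ->
  p < q -> w p < w q -> (forall x, g x = w (transp p q x)) ->
  invN N g = (invN N w + 1 + 2 * nbN N w p q)%N.
Proof.
move=> inj hp hq pq wpq hg.
have pw : p \in win N by rewrite mem_win.
have qw : q \in win N by rewrite mem_win.
have pnq : p != q by apply/eqP => e; rewrite e ltxx in pq.
have wpnq : w p != w q by apply/eqP => e; rewrite e ltxx in wpq.
set s := transp p q.
have e1 : invN N g = (\sum_(x <- win N) \sum_(y <- win N) (((s x < s y)%R && (w y < w x)%R) : nat))%N.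
  rewrite /invN -(@sum_transp N p q (fun x => \sum_(y <- win N) (((x < y)%R && (g y < g x)%R) : nat))%N) //.
  apply: eq_bigr => x _.
  rewrite -(@sum_transp N p q (fun y => (((s x < y)%R && (g y < g (s x))%R) : nat))) //.
  by apply: eq_bigr => y _; rewrite !hg /s !transpK.
have sp : s p = q by rewrite /s transp_l.
have sq : s q = p by rewrite /s transp_r.
have sR : forall x, (x != p) && (x != q) -> s x = x by move=> x /andP[h1 h2]; rewrite /s transp_other.
have rp : (\sum_(y <- win N) (((s p < s y)%R && (w y < w p)%R) : nat) =
    \sum_(y <- win N | (y != p) && (y != q)) (((q < y)%R && (w y < w p)%R) : nat))%N.
  rewrite (split2 _ (uniq_win N) pw qw pnq) sp sq ltxx /=.
  rewrite ltNge (ltW pq) /= !add0n.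
  by apply: eq_bigr => y /sR ->.
have rq : (\sum_(y <- win N) (((s q < s y)%R && (w y < w q)%R) : nat) =
    1 + \sum_(y <- win N | (y != p) && (y != q)) (((p < y)%R && (w y < w q)%R) : nat))%N.
  rewrite (split2 _ (uniq_win N) pw qw pnq) sp sq ltxx pq wpq /= addn0.
  by congr (_ + _)%N; apply: eq_bigr => y /sR ->.
have rx : forall x, (x != p) && (x != q) -> (\sum_(y <- win N) (((s x < s y)%R && (w y < w x)%R) : nat) =
    (((x < q)%R && (w p < w x)%R) : nat) + (((x < p)%R && (w q < w x)%R) : nat) +
    \sum_(y <- win N | (y != p) && (y != q)) (((x < y)%R && (w y < w x)%R) : nat))%N.
  move=> x Rx; rewrite (split2 _ (uniq_win N) pw qw pnq) sp sq (sR _ Rx).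
  by congr (_ + _)%N; apply: eq_bigr => y /sR ->.
have bp : (\sum_(y <- win N) (((p < y)%R && (w y < w p)%R) : nat) =
    \sum_(y <- win N | (y != p) && (y != q)) (((p < y)%R && (w y < w p)%R) : nat))%N.
  rewrite (split2 _ (uniq_win N) pw qw pnq) ltxx /= pq /= ltNge (ltW wpq) /=.
  by rewrite !add0n.
have bq : (\sum_(y <- win N) (((q < y)%R && (w y < w q)%R) : nat) =
    \sum_(y <- win N | (y != p) && (y != q)) (((q < y)%R && (w y < w q)%R) : nat))%N.
  rewrite (split2 _ (uniq_win N) pw qw pnq) ltxx /= ltNge (ltW pq) /=.
  by rewrite !add0n.
have bx : forall x, (x != p) && (x != q) -> (\sum_(y <- win N) (((x < y)%R && (w y < w x)%R) : nat) =
    (((x < p)%R && (w p < w x)%R) : nat) + (((x < q)%R && (w q < w x)%R) : nat) +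
    \sum_(y <- win N | (y != p) && (y != q)) (((x < y)%R && (w y < w x)%R) : nat))%N.
  by move=> x Rx; rewrite (split2 _ (uniq_win N) pw qw pnq).
have enb : nbN N w p q = (\sum_(c <- win N | (c != p) && (c != q))
     (((p < c)%R && (c < q)%R && (w p < w c)%R && (w c < w q)%R) : nat))%N.
  by rewrite /nbN (split2 _ (uniq_win N) pw qw pnq) !ltxx /= andbF.
rewrite e1 (split2 _ (uniq_win N) pw qw pnq) rp rq (eq_bigr _ rx).
rewrite /invN (split2 _ (uniq_win N) pw qw pnq) bp bq (eq_bigr _ bx) enb.
rewrite !big_split /=.
have key : forall c, (c != p) && (c != q) ->
  ((((q < c)%R && (w c < w p)%R) : nat) + (((p < c)%R && (w c < w q)%R) : nat) +
   (((c < q)%R && (w p < w c)%R) : nat) + (((c < p)%R && (w q < w c)%R) : nat) =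
   (((p < c)%R && (w c < w p)%R) : nat) + (((q < c)%R && (w c < w q)%R) : nat) +
   (((c < p)%R && (w p < w c)%R) : nat) + (((c < q)%R && (w q < w c)%R) : nat) +
   2 * (((p < c)%R && (c < q)%R && (w p < w c)%R && (w c < w q)%R) : nat))%N.
  move=> c /andP[cp cq].
  have wcp : w c != w p by apply: contraNneq cp => /inj ->.
  have wcq : w c != w q by apply: contraNneq cq => /inj ->.
  move: cp cq wcp wcq pq wpq.
  case: (ltgtP c p) => // h1 _; case: (ltgtP c q) => // h2 _;
  case: (ltgtP (w c) (w p)) => // h3 _; case: (ltgtP (w c) (w q)) => // h4 _ /= h5 h6;
  rewrite ?andbT ?andbF /=; lia.
have hk : (\sum_(c <- win N | (c != p) && (c != q))
  ((((q < c)%R && (w c < w p)%R) : nat) + (((p < c)%R && (w c < w q)%R) : nat) +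
   (((c < q)%R && (w p < w c)%R) : nat) + (((c < p)%R && (w q < w c)%R) : nat)) =
  \sum_(c <- win N | (c != p) && (c != q))
  ((((p < c)%R && (w c < w p)%R) : nat) + (((q < c)%R && (w c < w q)%R) : nat) +
   (((c < p)%R && (w p < w c)%R) : nat) + (((c < q)%R && (w q < w c)%R) : nat) +
   ((((p < c)%R && (c < q)%R && (w p < w c)%R && (w c < w q)%R) : nat) +
    (((p < c)%R && (c < q)%R && (w p < w c)%R && (w c < w q)%R) : nat))))%N.
  by apply: eq_bigr => c hc; rewrite key // addnn -mul2n.
move: hk; rewrite !big_split /=.
lia.
Qed.

Lemma tK i j x : j != 0 -> t i j (t i j x) = x.
Proof.
move/eqP=> hj; rewrite /t; case: eqP => [_|hi]; rewrite /transp /=; do ![case: eqP => //=]; move=> *; subst; lia.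
Qed.

Lemma tN i j x : j != 0 -> t i j (- x) = - t i j x.
Proof.
move/eqP=> hj; rewrite /t; case: eqP => [_|hi]; rewrite /transp /=; do ![case: eqP => //=]; move=> *; subst; lia.
Qed.

Lemma t_other i j x : x != i -> x != j -> x != - i -> x != - j -> t i j x = x.
Proof.
move=> /eqP h1 /eqP h2 /eqP h3 /eqP h4.
rewrite /t; case: eqP => [_|hi]; rewrite /transp /=; do ![case: eqP => //=]; move=> *; subst; lia.
Qed.

Lemma t_j i j : i != 0 -> i != - j -> j != 0 -> t i j j = i.
Proof.
move=> /eqP h1 /eqP h2 /eqP h3.
rewrite /t; case: eqP => [//|hi]; rewrite /transp /=; do ![case: eqP => //=]; move=> *; subst; lia.
Qed.

Lemma t_mi i j : i != 0 -> i != - j -> j != 0 -> t i j (- i) = - j.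
Proof.
move=> /eqP h1 /eqP h2 /eqP h3.
rewrite /t; case: eqP => [//|hi]; rewrite /transp /=; do ![case: eqP => //=]; move=> *; subst; lia.
Qed.

Lemma t_0 j x : t 0 j x = transp (- j) j x.
Proof. by rewrite /t eqxx. Qed.

Lemma t_mk k x : t (- k) k x = x.
Proof.
rewrite /t; case: eqP => [h|hi]; rewrite /transp /=; do ![case: eqP => //=]; move=> *; subst; lia.
Qed.

Lemma t_split i j x : i != 0 -> t i j x = transp i j (transp (- j) (- i) x).
Proof.
move=> /eqP h1.
rewrite /t; case: eqP => [//|hi]; rewrite /transp /=; do ![case: eqP => //=]; move=> *; subst; lia.
Qed.

Lemma t_valid i j : valid (`|i| + `|j|) (t i j).
Proof. move=> x hx; apply: t_other; apply/eqP; lia. Qed.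

Lemma valid_comp N f g : valid N f -> valid N g -> valid N (f \o g).
Proof. by move=> hf hg x hx /=; rewrite hg // hf. Qed.

Lemma sperm_t i j : j != 0 -> is_sperm (t i j).
Proof.
move=> hj; split; first by exists (t i j) => x; apply: tK.
split; first by move=> x; apply: tN.
by exists (`|i| + `|j|)%N; apply: t_valid.
Qed.

Lemma sperm_valid w : is_sperm w -> exists N, valid N w.
Proof. by case=> _ [_ [N hN]]; exists N. Qed.

Lemma sperm_comp f g : is_sperm f -> is_sperm g -> is_sperm (f \o g).
Proof.
move=> hf hg; have [Nf vf] := sperm_valid hf; have [Ng vg] := sperm_valid hg.
case: hf => bf [ff _]; case: hg => bg [og _].
split; first exact: bij_comp.
split; first by move=> x /=; rewrite og ff.
exists (maxn Nf Ng); apply: valid_comp; [exact: (valid_le vf (leq_maxl _ _)) | exact: (valid_le vg (leq_maxr _ _))].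
Qed.

Lemma sperm0 w : is_sperm w -> w 0 = 0.
Proof. case=> _ [h _]; move: (h 0); rewrite oppr0 => /eqP; rewrite -addr_eq0 -mulr2n mulrn_eq0 /=; by move/eqP. Qed.

Lemma ell0N_upd1 (N : nat) (f g : int -> int) (a : int) : 0 < a -> a <= N%:Z ->
  (forall x, 0 < x -> x != a -> g x = f x) ->
  (ell0N N g + ((f a < 0)%R : nat) = ell0N N f + ((g a < 0)%R : nat))%N.
Proof.
move=> a0 aN h; have ain : a \in pwin N by rewrite mem_pwin a0.
rewrite /ell0N !(bigD1_seq a) ?uniq_pwin //=.
have -> : (\sum_(i <- pwin N | i != a) ((g i < 0)%R : nat) =
    \sum_(i <- pwin N | i != a) ((f i < 0)%R : nat))%N.
  rewrite big_seq_cond [RHS]big_seq_cond; apply: eq_bigr => x /andP[xin xa].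
  by rewrite h //; move: xin; rewrite mem_pwin => /andP[].
lia.
Qed.

Lemma ell0N_upd2 (N : nat) (f g : int -> int) (a b : int) : 0 < a -> a <= N%:Z -> 0 < b -> b <= N%:Z -> a != b ->
  (forall x, 0 < x -> x != a -> x != b -> g x = f x) ->
  (ell0N N g + ((f a < 0)%R : nat) + ((f b < 0)%R : nat) =
   ell0N N f + ((g a < 0)%R : nat) + ((g b < 0)%R : nat))%N.
Proof.
move=> a0 aN b0 bN ab h.
pose hh := fun x => if x == a then g a else f x.
have e1 := @ell0N_upd1 N f hh a a0 aN.
have e2 := @ell0N_upd1 N hh g b b0 bN.
have hha : hh a = g a by rewrite /hh eqxx.
have hhb : hh b = f b by rewrite /hh eq_sym (negbTE ab).
rewrite hha in e1; rewrite hhb in e2.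
have {}e1 : (ell0N N hh + ((f a < 0)%R : nat) = ell0N N f + ((g a < 0)%R : nat))%N.
  by apply: e1 => x x0 xa; rewrite /hh (negbTE xa).
have {}e2 : (ell0N N g + ((f b < 0)%R : nat) = ell0N N hh + ((g b < 0)%R : nat))%N.
  apply: e2 => x x0 xb; rewrite /hh; case: eqVneq => [->//|xa]; exact: h.
lia.
Qed.

Lemma nbN_pos (N : nat) (w : int -> int) (p q c : int) : (`|c| <= N)%N -> p < c -> c < q -> w p < w c -> w c < w q ->
  (0 < nbN N w p q)%N.
Proof.
move=> cN h1 h2 h3 h4; rewrite /nbN (bigD1_seq c) ?uniq_win ?mem_win //=.
by rewrite h1 h2 h3 h4.
Qed.

Lemma invN_transp_desc (N : nat) (w g : int -> int) (p q : int) : injective w ->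
  (`|p| <= N)%N -> (`|q| <= N)%N ->
  p < q -> w q < w p -> (forall x, g x = w (transp p q x)) ->
  (invN N g + 1 <= invN N w)%N.
Proof.
move=> inj hp hq pq wqp hg.
have ginj : injective g.
  by move=> x y; rewrite !hg => /inj /transp_inj.
have gp : g p = w q by rewrite hg transp_l.
have gq : g q = w p by rewrite hg transp_r.
have hw : forall x, w x = g (transp p q x) by move=> x; rewrite hg transpK.
have := @invN_transp N g w p q ginj hp hq pq; rewrite gp gq => /(_ wqp hw) ->.
lia.
Qed.

Lemma t_i i j : i != 0 -> i != - j -> j != 0 -> t i j i = j.
Proof.
move=> /eqP h1 /eqP h2 /eqP h3.
rewrite /t; case: eqP => [//|hi]; rewrite /transp /=; do ![case: eqP => //=]; move=> *; subst; lia.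
Qed.

Lemma negb_sum (x : int) : x != 0 -> (((- x < 0)%R : nat) + ((x < 0)%R : nat))%N = 1%N.
Proof. by move=> hx; case: (ltgtP x 0) hx => // h _; rewrite ?oppr_lt0 ?oppr_gt0 ?h ?(ltW h) //= ltNge (ltW h). Qed.

Lemma len_ext X (f g : int -> int) : (forall x, f x = g x) -> len X f = len X g.
Proof. by move=> h; rewrite (functional_extensionality f g h). Qed.

Lemma ell0N_id N : ell0N N id = 0%N.
Proof.
rewrite /ell0N; apply: big1_seq => x /andP[_]; rewrite mem_pwin => /andP[h _].
by apply/eqP; rewrite eqb0 -leNgt; apply: ltW.
Qed.

Lemma ell0_t0 (K : nat) : (0 < K)%N -> ell0 (t 0 K%:Z) = 1%N.
Proof.
move=> K0; have hv : valid K (t 0 K%:Z) by move=> x hx; apply: t_other; apply/eqP; lia.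
rewrite (ell0_ell0N hv).
have e := @ell0N_upd1 K id (t 0 K%:Z) K%:Z.
rewrite ell0N_id t_0 transp_r /= in e.
have hmK : (- K%:Z < 0)%R = true by rewrite oppr_lt0; lia.
rewrite hmK in e.
have := e ltac:(lia) ltac:(lia); rewrite addn0 add0n; apply.
move=> x x0 xK; rewrite t_0 transp_other //; apply/eqP; lia.
Qed.

Lemma step_j0 (X : typ) (w : int -> int) (K : nat) :
  is_sperm w -> (0 < K)%N -> inWinf X (t 0 K%:Z) ->
  len X (w \o t 0 K%:Z) = (len X w + 1)%N -> False.
Proof.
move=> hw K0 hinf hlen.
set k := K%:Z.
have k0 : k != 0 by rewrite /k; apply/eqP; lia.
have inj := sperm_inj hw.
have hodd : forall x, w (- x) = - w x by case: hw => _ [].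
have w0 := sperm0 hw.
have hg : is_sperm (w \o t 0 k) := sperm_comp hw (sperm_t 0 k0).
have ginj := sperm_inj hg.
have [N0 hv0] := sperm_valid hw.
have [hD|hD] : X = TD \/ X <> TD by destruct X; [right|right|left].
  by move: hinf; rewrite hD => -[_ /(_ erefl)]; rewrite ell0_t0.
set N := (N0 + K)%N.
have hvN : valid N w := valid_le hv0 (leq_addr _ _).
have hvg : valid N (w \o t 0 k).
  apply: valid_comp => // x hx; rewrite t_0 transp_other //; apply/eqP; rewrite /k /N in hx *; lia.
rewrite (len_lenN _ ginj hvg) (len_lenN _ inj hvN) in hlen.
have hgx : forall x, (w \o t 0 k) x = w (transp (-k) k x) by move=> x; rewrite /= t_0.
have kN : (`|k| <= N)%N by rewrite /k /N; lia.
have mkN : (`|-k| <= N)%N by rewrite /k /N; lia.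
have mkk : - k < k by rewrite /k; lia.
have e0 := @ell0N_upd1 N w (w \o t 0 k) k.
rewrite /= t_0 transp_r hodd in e0.
have {}e0 := e0 ltac:(rewrite /k; lia) ltac:(rewrite /k /N; lia)
  ltac:(move=> x x0 xk; rewrite /= t_0 transp_other //; apply/eqP; lia).
have wk0 : w k != 0.
  apply/eqP => e; have := inj k 0; rewrite e w0 => /(_ erefl) ek; by rewrite ek eqxx in k0.
case: (ltgtP (w k) 0) wk0 => // hwk _.
- have hi := @invN_transp_desc N w (w \o t 0 k) (-k) k inj mkN kN mkk.
  rewrite hodd in hi; have {}hi := hi ltac:(lia) hgx.
  have h1 : (w k < 0)%R = true by [].
  have h2 : (- w k < 0)%R = false by rewrite oppr_lt0 ltNge (ltW hwk).
  rewrite h1 h2 /= in e0.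
  case: X hinf hD hlen => _ hD' hlen; [rewrite /lenN in hlen; lia|rewrite /lenN in hlen; lia|by case: hD'].
- have hi := @invN_transp N w (w \o t 0 k) (-k) k inj mkN kN mkk.
  rewrite hodd in hi; have {}hi := hi ltac:(lia) hgx.
  have hnb : (0 < nbN N w (-k) k)%N.
    apply: (@nbN_pos N w (-k) k 0) => //; rewrite ?w0 ?hodd; lia.
  have h1 : (w k < 0)%R = false by rewrite ltNge (ltW hwk).
  have h2 : (- w k < 0)%R = true by rewrite oppr_lt0.
  rewrite h1 h2 /= in e0.
  case: X hinf hD hlen => _ hD' hlen; [rewrite /lenN in hlen; lia|rewrite /lenN in hlen; lia|by case: hD'].
Qed.

Lemma step_facts (w : int -> int) (jj : int) (K : nat) (N : nat) :
  is_sperm w -> (0 < K)%N -> jj < K%:Z -> jj != 0 -> jj != - K%:Z ->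
  valid N w -> (`|jj| <= N)%N -> (K <= N)%N ->
  [/\ (ell0N N (w \o t jj K%:Z) <= ell0N N w + 2)%N,
      (ell0N N w <= ell0N N (w \o t jj K%:Z) + 2)%N,
      odd (ell0N N (w \o t jj K%:Z)) = odd (ell0N N w),
      ((w K%:Z < w jj)%R -> invN N (w \o t jj K%:Z) + 2 <= invN N w)%N &
      ((w jj < w K%:Z)%R -> invN N (w \o t jj K%:Z) =
          invN N w + 2 + 2 * nbN N w jj K%:Z + 2 * nbN N (w \o transp jj K%:Z) (- K%:Z) (- jj))%N].
Proof.
move=> hw K0 jK j0 jmk hv jN KN.
set k := K%:Z.
have k0 : k != 0 by rewrite /k; apply/eqP; lia.
have inj := sperm_inj hw.
have hodd : forall x, w (- x) = - w x by case: hw => _ [].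
have w0 := sperm0 hw.
have wnz : forall x : int, x != 0 -> w x != 0.
  move=> x hx; apply/eqP => e; have := inj x 0; rewrite e w0 => /(_ erefl) ex.
  by rewrite ex eqxx in hx.
set g := w \o t jj k.
set w1 := w \o transp jj k.
have hgx : forall x, g x = w1 (transp (-k) (-jj) x) by move=> x; rewrite /g /w1 /= t_split.
have w1inj : injective w1 by move=> x y /inj /transp_inj.
have w1mk : w1 (-k) = w (-k).
  by rewrite /w1 /= transp_other //; apply/eqP; move: jmk k0 => /eqP + /eqP; lia.
have w1mj : w1 (-jj) = w (-jj).
  by rewrite /w1 /= transp_other //; apply/eqP; move: jmk j0 => /eqP + /eqP; lia.
have kN : (`|k| <= N)%N by rewrite /k; lia.
have mkN : (`|-k| <= N)%N by rewrite /k; lia.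
have mjN : (`|-jj| <= N)%N by lia.
have mkmj : - k < - jj by rewrite ltrN2.
have wk0 := wnz _ k0.
have wj0 := wnz _ j0.
have hell : (ell0N N g <= ell0N N w + 2)%N /\ (ell0N N w <= ell0N N g + 2)%N /\
            odd (ell0N N g) = odd (ell0N N w).
  case: (ltgtP jj 0) (j0) => // hj _.
  - have e := @ell0N_upd2 N w g (-jj) k ltac:(lia) ltac:(lia) ltac:(rewrite /k; lia)
      ltac:(rewrite /k; lia) ltac:(apply/eqP; move: jmk => /eqP; lia).
    rewrite /g /= t_mi // ?(t_j) // in e.
    rewrite !hodd in e.
    have {}e := e ltac:(move=> x x0 xm xk; rewrite /= t_other //; apply/eqP;
       move: xm xk => /eqP + /eqP; rewrite /k; lia).
    have s1 := negb_sum wj0; have s2 := negb_sum wk0.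
    have he : (ell0N N g + 2 * ((w k < 0)%R : nat) = ell0N N w + 2 * ((w jj < 0)%R : nat))%N.
      rewrite /g; lia.
    split; [lia|split; [lia|]].
    by have := congr1 odd he; rewrite !mul2n !oddD !odd_double !addbF.
  - have e := @ell0N_upd2 N w g jj k hj ltac:(lia) ltac:(rewrite /k; lia)
      ltac:(rewrite /k; lia) ltac:(apply/eqP; move: jK; lia).
    rewrite /g /= t_i // ?t_j // in e.
    have {}e := e ltac:(move=> x x0 xj xk; rewrite /= t_other //; apply/eqP;
       move: xj xk => /eqP + /eqP; rewrite /k; lia).
    have he : ell0N N g = ell0N N w by rewrite /g; lia.
    by rewrite he; split; [lia|split; [lia|]].
case: hell => h1 [h2 h3].
split => //.
- move=> hkj.
  have hi1 := @invN_transp_desc N w w1 jj k inj jN kN jK hkj (fun x => erefl).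
  have hi2 := @invN_transp_desc N w1 g (-k) (-jj) w1inj mkN mjN mkmj.
  rewrite w1mk w1mj !hodd ltrN2 in hi2; have {}hi2 := hi2 hkj hgx.
  lia.
- move=> hjk.
  have hi1 := @invN_transp N w w1 jj k inj jN kN jK hjk (fun x => erefl).
  have hi2 := @invN_transp N w1 g (-k) (-jj) w1inj mkN mjN mkmj.
  rewrite w1mk w1mj !hodd ltrN2 in hi2.
  have {}hi2 := hi2 hjk hgx.
  lia.
Qed.

Lemma step_main (X : typ) (w : int -> int) (jj : int) (K : nat) :
  is_sperm w -> (0 < K)%N -> jj < K%:Z -> inWinf X (t jj K%:Z) ->
  len X (w \o t jj K%:Z) = (len X w + 1)%N ->
  [/\ jj != 0, jj != - K%:Z, w jj < w K%:Z,
      (forall c1 c2 : int, jj < c1 -> c1 < K%:Z -> w jj < w c1 -> w c1 < w K%:Z ->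
          - K%:Z < c2 -> c2 < - jj -> c2 != K%:Z -> c2 != jj ->
          w (- K%:Z) < w c2 -> w c2 < w (- jj) -> False)
    & odd (ell0 (w \o t jj K%:Z)) = odd (ell0 w)].
Proof.
move=> hw K0 jK hinf hlen.
have j0 : jj != 0.
  apply/eqP => e; move: hinf hlen; rewrite e => hinf hlen; exact: (step_j0 hw K0 hinf hlen).
have jmk : jj != - K%:Z.
  apply/eqP => e; move: hlen; rewrite e (@len_ext X _ w) => [|x]; [lia|by rewrite /= t_mk].
set k := K%:Z.
have k0 : k != 0 by rewrite /k; apply/eqP; lia.
have inj := sperm_inj hw.
have hodd : forall x, w (- x) = - w x by case: hw => _ [].
have w0 := sperm0 hw.
have hg : is_sperm (w \o t jj k) := sperm_comp hw (sperm_t jj k0).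
have ginj := sperm_inj hg.
have [N0 hv0] := sperm_valid hw.
have facts : forall N, (N0 + `|jj| + K <= N)%N ->
  [/\ len X (w \o t jj k) = lenN X N (w \o t jj k), len X w = lenN X N w,
      ell0 (w \o t jj k) = ell0N N (w \o t jj k), ell0 w = ell0N N w &
      [/\ (ell0N N (w \o t jj k) <= ell0N N w + 2)%N,
      (ell0N N w <= ell0N N (w \o t jj k) + 2)%N,
      odd (ell0N N (w \o t jj k)) = odd (ell0N N w),
      ((w k < w jj)%R -> invN N (w \o t jj k) + 2 <= invN N w)%N &
      ((w jj < w k)%R -> invN N (w \o t jj k) =
          invN N w + 2 + 2 * nbN N w jj k + 2 * nbN N (w \o transp jj k) (- k) (- jj))%N]].
  move=> N hN.
  have hv : valid N w by apply: (valid_le hv0); lia.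
  have hvt : valid N (t jj k) by apply: (valid_le (@t_valid jj k)); rewrite /k; lia.
  have hvg : valid N (w \o t jj k) by apply: valid_comp.
  split.
  - exact: len_lenN.
  - exact: len_lenN.
  - exact: ell0_ell0N.
  - exact: ell0_ell0N.
  - apply: step_facts => //; lia.
have wjk : w jj < w k.
  case: (ltgtP (w jj) (w k)) => // hkj.
    have [l1 l2 _ _ [f1 f2 _ f4 _]] := facts _ (leqnn _).
    have := f4 hkj; rewrite l1 l2 in hlen.
    by destruct X; rewrite /lenN in hlen; lia.
  by move/inj: hkj => e; rewrite e ltxx in jK.
split => //.
- move=> c1 c2 h1 h2 h3 h4 h5 h6 h7 h8 h9 h10.
  have [l1 l2 _ _ [f1 f2 _ _ f5]] := facts (N0 + `|jj| + K + `|c1| + `|c2|)%N ltac:(lia).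
  set N := (N0 + `|jj| + K + `|c1| + `|c2|)%N in l1 l2 f1 f2 f5.
  have {}f5 := f5 wjk.
  have nb1 : (0 < nbN N w jj k)%N.
    by apply: (@nbN_pos N w jj k c1) => //; rewrite /N; lia.
  have nb2 : (0 < nbN N (w \o transp jj k) (- k) (- jj))%N.
    apply: (@nbN_pos N _ (-k) (-jj) c2) => //=; first by rewrite /N; lia.
    + rewrite (@transp_other jj k (-k)) ?(@transp_other jj k c2) //; apply/eqP;
      move: jmk k0 => /eqP + /eqP; lia.
    + rewrite (@transp_other jj k (-jj)) ?(@transp_other jj k c2) //; apply/eqP;
      move: jmk j0 => /eqP + /eqP; lia.
  have iw := @ell0N_le_invN N w w0.
  rewrite l1 l2 in hlen.
  by destruct X; rewrite /lenN in hlen; lia.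
- have [_ _ e1 e2 [_ _ f3 _ _]] := facts _ (leqnn _).
  by rewrite e1 e2.
Qed.

Lemma LD_le (u : int -> int) (B : nat) :
  (forall m : nat, (B < m)%N -> ~~ (u (m%:Z + 1) < u m%:Z)) -> (LD u <= B)%N.
Proof.
move=> h; apply/bigmax_leqP_seq => i _ Pi; rewrite leqNgt; apply/negP => hi.
by move: (h i hi); rewrite Pi.
Qed.

Lemma bigmax_attained (r : seq nat) (P : pred nat) :
  (0 < \max_(i <- r | P i) i)%N -> exists2 i, i \in r & P i && (\max_(i <- r | P i) i == i).
Proof.
elim: r => [|x r IH]; first by rewrite big_nil.
rewrite big_cons; case: ifP => Px.
  case: (leqP (\max_(i <- r | P i) i) x) => hx.
    move=> _; exists x; first by rewrite inE eqxx.
    by rewrite Px /=.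
  move=> h0; have [i ir /andP[Pi /eqP ei]] := IH (leq_ltn_trans (leq0n _) hx).
  exists i; first by rewrite inE ir orbT.
  by rewrite Pi /= ei.
move=> h0; have [i ir hi] := IH h0.
by exists i; rewrite // inE ir orbT.
Qed.

Lemma LD_desc (v : int -> int) : (0 < LD v)%N -> v ((LD v)%:Z + 1) < v (LD v)%:Z.
Proof.
rewrite /LD => h; have [i _ /andP[Pi /eqP ->]] := bigmax_attained h.
exact: Pi.
Qed.

Lemma LD_inc (v : int -> int) : is_sperm v ->
  forall m : nat, (LD v < m)%N -> v m%:Z < v (m%:Z + 1).
Proof.
move=> hw m hm; have inj := sperm_inj hw; have [N hv] := sperm_valid hw.
have hvs := sbound_valid hv.
have hle : v m%:Z <= v (m%:Z + 1).
  case: (leqP m (sbound v)) => hms.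
    rewrite leNgt; apply/negP => Pm.
    have : (m <= LD v)%N.
      rewrite /LD; apply: (@leq_bigmax_seq _ _ (fun m : nat => (v (m%:Z + 1) < v m%:Z)%R) id m) => //.
      rewrite mem_iota; lia.
    lia.
  rewrite !hvs //; lia.
rewrite le_eqVlt in hle; case/orP: hle => // /eqP /inj; lia.
Qed.

Unset Implicit Arguments.

Theorem lemma4p14 (X : typ) (n : nat) (v : int -> int) (l : nat) (j : nat -> int) :
  (0 < n)%N ->
  inW X n v ->
  (0 < LD v)%N ->
  (1 <= l)%N ->
  ((forall a : nat, (1 <= a)%N -> (a < l)%N -> j a < j a.+1) /\ j l < (LD v)%:Z
   \/
   X = TB /\ j 1%N = 0 /\
   (forall a : nat, (2 <= a)%N -> (a < l)%N -> j a < j a.+1) /\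
   ((2 <= l)%N -> j l < (LD v)%:Z)) ->
  (forall a : nat, (1 <= a)%N -> (a <= l)%N ->
     inWinf X (t (j a) (LD v)%:Z) /\
     len X (prodt v j (LD v)%:Z a) = (len X v + a)%N) ->
  (inW X n (prodt v j (LD v)%:Z l) /\ precLD (prodt v j (LD v)%:Z l) v)
  \/
  (inW X n.+1 (prodt v j (LD v)%:Z l) /\ (LD (prodt v j (LD v)%:Z l) < LD v)%N).
Proof.
move=> n0 [[hvs hvD] hvfix] LD0 l1 hj hlen.
have vdesc := LD_desc LD0.
have vinc := LD_inc hvs.
have precH : (LD (prodt v j (LD v)%:Z l) <= LD v)%N ->
    prodt v j (LD v)%:Z l (LD v)%:Z < v (LD v)%:Z -> precLD (prodt v j (LD v)%:Z l) v.
  move=> h1 h2; rewrite /precLD; case: (ltngtP (LD (prodt v j (LD v)%:Z l)) (LD v)) h1 => // h _.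
    by left.
  by right; rewrite h; split.
move: vdesc vinc precH LD0 hj hlen.
set K := LD v => vdesc vinc precH K0 hj hlen.
set k := K%:Z in vdesc vinc precH hj hlen *.
set w := prodt v j k in precH hlen *.
have k0 : k != 0 by rewrite /k; apply/eqP; lia.
have inj := sperm_inj hvs.
have hodd : forall x, v (- x) = - v x by case: hvs => _ [].
have v0 := sperm0 hvs.
have hvn : valid n v.
  move=> i hi; case: (ltP 0 i) => h; first by apply: hvfix; lia.
  by rewrite -[i]opprK hodd hvfix ?opprK //; lia.
have vwin : forall x, (`|x| <= n)%N -> (`|v x| <= n)%N by move=> x; apply: win_pres.
have Kn : (K < n)%N.
  rewrite ltnNge; apply/negP => hnK.
  have e1 := hvfix (k + 1) ltac:(rewrite /k; lia).
  have : v k <= k.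
    case: (eqVneq K n) => [eKn|nKn].
      have := vwin k ltac:(rewrite /k; lia); rewrite /k; lia.
    by rewrite hvfix // /k; lia.
  lia.
have vmono : forall x y : int, k < x -> x < y -> v x < v y.
  have aux : forall (d : nat) (x : int), k < x -> v x < v (x + d.+1%:Z).
    elim=> [|d IH] x hx.
      have ex : x = (absz x)%:Z by lia.
      rewrite ex; apply: vinc; rewrite /k in hx; lia.
    apply: lt_trans (IH x hx) _.
    have ex : x + d.+1%:Z = (absz (x + d.+1%:Z))%:Z by lia.
    have -> : x + d.+2%:Z = (absz (x + d.+1%:Z))%:Z + 1 by lia.
    rewrite ex; apply: vinc; rewrite /k in hx; lia.
  move=> x y hx hxy; have := aux (absz (y - x - 1)%R) x hx.
  by have -> : x + (absz (y - x - 1)%R).+1%:Z = y by lia.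
have wsp : forall a, is_sperm (w a).
  elim=> [|a IH] //; exact: (sperm_comp IH (sperm_t _ k0)).
have cover : forall a, (a < l)%N -> len X (w a.+1) = (len X (w a) + 1)%N.
  move=> a al; have [_ e1] := hlen a.+1 ltac:(lia) ltac:(lia).
  case: a al e1 => [|a] al e1; first by rewrite e1.
  have [_ e2] := hlen a.+1 ltac:(lia) ltac:(lia).
  by rewrite e1 e2; lia.
have SM : forall a, (a < l)%N -> j a.+1 < k -> _ :=
  fun a al hjk => step_main (wsp a) K0 hjk (proj1 (hlen a.+1 ltac:(lia) ltac:(lia))) (cover a al).
have [hinc hjl] : (forall a : nat, (1 <= a)%N -> (a < l)%N -> j a < j a.+1) /\ j l < k.
  case: hj => // [[XB [j10 _]]].
  have := SM 0%N l1; rewrite j10 => /(_ ltac:(rewrite /k; lia)).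
  by case; rewrite eqxx.
have jmono : forall a b, (1 <= a)%N -> (a < b)%N -> (b <= l)%N -> j a < j b.
  move=> a b a1; elim: b => // b IH ab bl.
  rewrite ltnS leq_eqVlt in ab; case/orP: ab => [/eqP eab|ab]; first by subst a; apply: hinc; lia.
  apply: lt_trans (IH ab _) (hinc b _ _); lia.
have jk : forall a, (1 <= a)%N -> (a <= l)%N -> j a < k.
  move=> a a1 al; case: (ltngtP a l) al => // h _; last by rewrite h.
  exact: lt_trans (jmono a l a1 h (leqnn _)) hjl.
have SM' : forall a, (a < l)%N -> _ := fun a al => SM a al (jk a.+1 ltac:(lia) ltac:(lia)).
have wk : forall a, (a < l)%N -> w a.+1 k = w a (j a.+1).
  move=> a al; have [h1 h2 _ _ _] := SM' a al.
  by rewrite /w /= t_j.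
have monok : forall a, (1 <= a)%N -> (a <= l)%N -> w a k < v k.
  elim=> // a IH a1 al; have [_ _ h3 _ _] := SM' a ltac:(lia).
  rewrite wk //; case: a IH a1 al h3 => [|a] IH _ al h3; first exact: h3.
  apply: lt_trans h3 (IH _ _); lia.
have par : forall a, (a <= l)%N -> odd (ell0 (w a)) = odd (ell0 v).
  elim=> // a IH al; have [_ _ _ _ h5] := SM' a al.
  by rewrite h5 IH // ltnW.
have inWu : forall N, (forall m, N%:Z < m -> w l m = m) -> inW X N (w l).
  move=> N hf; split => //; split; first exact: wsp.
  by move=> XD; rewrite par //; apply: hvD.
case: (ltP (j 1%N) (-k)) => hj1; last first.
  have hjr : forall a, (1 <= a)%N -> (a <= l)%N -> - k <= j a.
    move=> a a1 al; case: (ltngtP 1 a) a1 => // h _; last by rewrite -h.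
    exact: le_trans hj1 (ltW (jmono 1 a (leqnn _) h al)).
  have fixA : forall a, (a <= l)%N -> forall x, k < x -> w a x = v x.
    elim=> // a IH al x hx; have [h1 h2 _ _ _] := SM' a al.
    have hjk := jk a.+1 ltac:(lia) al; have hjr' := hjr a.+1 ltac:(lia) al.
    rewrite /w /= t_other; first exact: IH (ltnW al) x hx;
      apply/eqP; rewrite /k in hx hjk hjr' *; lia.
  left; split.
    apply: inWu => m hm; rewrite fixA // ?hvfix //; rewrite /k; lia.
  apply: precH; last exact: monok.
  apply: LD_le => m hm; rewrite !fixA //; try (rewrite /k; lia).
  by rewrite -leNgt; apply: ltW; apply: vinc.
have [s01 s02 s03 s04 s05] := SM' 0%N l1.
rewrite /w /= in s03 s04.
have vneg : forall x, n%:Z < x -> v (- x) = - x by move=> x hx; rewrite hodd hvfix.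
have vkb : (`|v K%:Z| <= n)%N by apply: vwin; lia.
have nK : (K < n)%N := Kn.
have hvf : forall x : int, (n < `|x|)%N -> v x = x := hvn.
have Mle : - j 1%N <= n%:Z + 1.
  rewrite leNgt; apply/negP => hMn.
  apply: (s04 (- (n%:Z + 1)) (n%:Z + 1)).
  - lia.
  - rewrite /k; lia.
  - rewrite (hvf (j 1%N)); last lia.
    rewrite (hvf (- (n%:Z + 1))); lia.
  - rewrite hvf; [lia|lia].
  - rewrite /k; lia.
  - lia.
  - apply/eqP; rewrite /k; lia.
  - apply/eqP; lia.
  - rewrite hodd (hvf (n%:Z + 1)); lia.
  - rewrite (hvf (n%:Z + 1)); last lia.
    rewrite (hvf (- (j 1%N))); lia.
have [MnE|Mlt] : - j 1%N = n%:Z + 1 \/ - j 1%N <= n%:Z by lia.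
  have j1E : j 1%N = - (n%:Z + 1) by lia.
  have w1k : w 1%N K%:Z = - (n%:Z + 1).
    rewrite (wk 0%N l1) /w /= j1E hvf //; lia.
  have w1o : forall x, x != K%:Z -> x != n%:Z + 1 -> x != - K%:Z -> x != - (n%:Z + 1) -> w 1%N x = v x.
    move=> x h1 h2 h3 h4; rewrite /w /= t_other // j1E // opprK //.
  have w1n1 : w 1%N (n%:Z + 1) = - v K%:Z.
    rewrite /w /=; have -> : n%:Z + 1 = - j 1%N by lia.
    by rewrite t_mi // hodd.
  have w1v : valid n.+1 (w 1%N).
    move=> x hx; rewrite w1o ?hvf //; try lia; apply/eqP; lia.
  have w1inj := sperm_inj (wsp 1%N).
  have l_1 : l = 1%N.
    case: (ltngtP l 1) l1 => // hl _.
    have [_ _ t3 _ _] := SM' 1%N hl.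
    have j12 := jmono 1%N 2%N (leqnn _) (ltnSn _) hl.
    have j2k := jk 2%N (erefl) hl.
    have := @win_pres n.+1 (w 1%N) (j 2%N) w1inj w1v ltac:(rewrite /k in j2k; lia).
    rewrite w1k in t3; lia.
  rewrite l_1 in inWu *; right; split.
    apply: inWu => m hm; rewrite w1o ?hvf //; try lia; apply/eqP; lia.
  have : (LD (w 1%N) <= K.-1)%N; last lia.
  apply: LD_le => m hm.
  have [mK|[mmid|[mn|[mn1|mbig]]]] : m = K \/ (K < m < n)%N \/ m = n \/ m = n.+1 \/ (n.+1 < m)%N by lia.
  - subst m; rewrite w1k -leNgt.
    have := @win_pres n.+1 (w 1%N) (K%:Z + 1) w1inj w1v ltac:(lia); lia.
  - rewrite !w1o; try (apply/eqP; lia).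
    by rewrite -leNgt; apply: ltW; apply: vinc; lia.
  - subst m.
    rewrite w1n1 w1o; try (apply/eqP; lia).
    apply/negP => h.
    have vnb : (`|v n%:Z| <= n)%N by apply: vwin; lia.
    apply: (s04 (- n%:Z) n%:Z).
    + lia.
    + lia.
    + rewrite (hvf (j 1%N)); last lia.
      rewrite hodd; lia.
    + rewrite hodd; lia.
    + lia.
    + lia.
    + apply/eqP; lia.
    + apply/eqP; lia.
    + rewrite hodd; lia.
    + rewrite (hvf (- (j 1%N))); lia.
  - subst m; have -> : (n.+1)%:Z = n%:Z + 1 by lia.
    rewrite w1n1 w1o; try (apply/eqP; lia).
    rewrite hvf; lia.
  - rewrite !w1o; try (apply/eqP; lia).
    rewrite !hvf; lia.
have vj1 : v (j 1%N) = - v (- j 1%N) by rewrite hodd opprK.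
have hjr2 : forall a, (2 <= a)%N -> (a <= l)%N -> - k <= j a.
  move=> a a2 al; rewrite leNgt; apply/negP => hja.
  have l2 : (1 < l)%N by lia.
  have hj2 : j 2%N < - k.
    case: (ltngtP 2 a) a2 => // h _; last by rewrite h.
    exact: lt_trans (jmono 2%N a _ h al) hja.
  have [_ _ t3 _ _] := SM' 1%N l2.
  have j12 := jmono 1%N 2%N (leqnn _) (ltnSn _) l2.
  rewrite (wk 0%N l1) /w /= in t3.
  rewrite t_other in t3; try (apply/eqP; rewrite /k in hj2 hj1 *; lia).
  have vj2 : v (j 2%N) = - v (- j 2%N) by rewrite hodd opprK.
  rewrite vj2 vj1 in t3.
  have := vmono (- j 2%N) (- j 1%N) ltac:(rewrite /k in hj2 *; lia) ltac:(lia).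
  lia.
have fixB : forall a, (1 <= a)%N -> (a <= l)%N -> forall x, k < x -> w a x = w 1%N x.
  elim=> // a IH a1 al x hx; case: a IH a1 al => [|a] IH _ al; first by [].
  have [h1 h2 _ _ _] := SM' a.+1 al.
  have hjk := jk a.+2 ltac:(lia) al; have hjr' := hjr2 a.+2 ltac:(lia) al.
  have -> : w a.+2 x = w a.+1 (t (j a.+2) k x) by [].
  rewrite t_other; first exact: IH (ltn0Sn _) (ltnW al) x hx;
    apply/eqP; rewrite /k in hx hjk hjr' *; lia.
have w1o : forall x, k < x -> x != - j 1%N -> w 1%N x = v x.
  move=> x hx hxM; rewrite /w /= t_other //; apply/eqP; rewrite /k in hx hj1 *; lia.
have w1M : w 1%N (- j 1%N) = - v K%:Z.
  by rewrite /w /= t_mi // hodd.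
left; split.
  apply: inWu => m hm; rewrite fixB // ?w1o ?hvf //; try (rewrite /k; lia); apply/eqP; lia.
apply: precH; last exact: monok.
apply: LD_le => m hm.
rewrite !fixB //; try (rewrite /k; lia).
have [e1|[e2|e3]] : m%:Z + 1 = - j 1%N \/ m%:Z = - j 1%N \/
    (m%:Z + 1 < - j 1%N \/ - j 1%N < m%:Z) by lia.
- rewrite e1 w1M w1o; try (rewrite /k; lia).
  apply/negP => h.
  have vi := vinc m hm.
  rewrite e1 in vi.
  apply: (s04 (- m%:Z) m%:Z).
  + lia.
  + lia.
  + rewrite vj1 (hodd m%:Z); lia.
  + rewrite (hodd m%:Z); lia.
  + lia.
  + lia.
  + apply/eqP; lia.
  + apply/eqP; lia.
  + rewrite (hodd K%:Z); lia.
  + lia.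
- rewrite e2 w1M w1o; try (rewrite /k; lia).
  have hv := vmono (- j 1%N) (- j 1%N + 1) ltac:(rewrite /k; lia) ltac:(lia).
  rewrite vj1 in s03.
  rewrite -leNgt; apply: ltW; apply: lt_trans hv; by rewrite ltrNl.
- rewrite !w1o; try (rewrite /k; lia); try (apply/eqP; lia).
  by rewrite -leNgt; apply: ltW; apply: vinc.
Qed.
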